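(* Let $N\ge 1$ senders each receive an equiprobable binary input $x_i\in\{0,1\}$, and let $\theta$ satisfy $2\tan^{-1}(2^{1/N}-1)\le\theta<\pi/2$. If each sender $S_i$ sends the qubit state $|\psi_{x_i}\rangle=\cos(\theta/2)|0\rangle+(-1)^{x_i}\sin(\theta/2)|1\rangle$, then there is a $2^N$-outcome measurement $\{M_{\vec z}\}$ on the receiver's $N$ qubits with $\langle\psi_{\vec x}|M_{\vec x}|\psi_{\vec x}\rangle=0$ for all $\vec x\in\{0,1\}^N$ (where $|\psi_{\vec x}\rangle=|\psi_{x_1}\rangle\otimes\cdots\otimes|\psi_{x_N}\rangle$), so that the quantum success metric is $\widetilde{\mathcal S}_Q=1$; each sender's pair of states has anti-distinguishability $A^Q=\tfrac12(1+\sin\theta)$; while any classical strategy achieving $\widetilde{\mathcal S}_C=1$ with a common anti-distinguishability bound $A$ for all senders requires $A^C=1$. Consequently $$\left(\frac{A^C}{A^Q}\right)^N=\left(\frac{2}{1+\sin\theta}\right)^N>1.$$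
   Context: Setting: $N$ independent senders, one receiver with no input. For quantum communication, sender $S_i$ sends a state $\rho_{x_i}$ and the receiver measures a POVM $\{M_{z}\}$ on $\bigotimes_i\rho_{x_i}$, with $z$ ranging over input tuples $\vec x$. The success metric for anti-distinguishing distributed inputs is $\widetilde{\mathcal S}=1-\sum_{\vec x}q_{\vec x}\,p(z=\vec x|\vec x)$ with $q_{\vec x}=\prod_i q_{x_i}$ (here $q_{x_i}=1/2$). The anti-distinguishability of a set of states $\{\rho_{x}\}$ with prior $\{q_x\}$ is $1-\min_{\{M_z\}}\sum_z\min_x q_x\operatorname{Tr}(\rho_xM_z)$, the minimum over POVMs with as many outcomes as inputs. Classically, sender $S_i$ encodes $x_i$ into a message $m_i$ via $p_e(m_i|x_i)$ with anti-distinguishability $1-\sum_{m_i}\min_{x_i}q_{x_i}p_e(m_i|x_i)$, and the receiver decodes with $p_d(z|\vec m)$. $A^C$ is the minimal common value $A$ of the senders' anti-distinguishabilities for which a classical strategy achieves the target value of $\widetilde{\mathcal S}$ (here $1$); $A^Q$ is the common anti-distinguishability of each sender's quantum states in the quantum protocol achieving the same value. *)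

(* Defs.v *)
From HB Require Import structures.
From mathcomp Require Import all_boot all_order all_algebra.
From mathcomp Require Import all_classical all_reals.
From mathcomp Require Import exp trigo.
From mathcomp Require Import complex.

Set Implicit Arguments.
Unset Strict Implicit.
Unset Printing Implicit Defensive.
Import Order.TTheory GRing.Theory Num.Theory.
Local Open Scope ring_scope.
Local Open Scope classical_set_scope.

Section Defs.
Variable R : realType.
Local Notation C := R[i].

Definition fmin (X : finType) (f : X -> R) : R := inf (range f).

Definition op (T : finType) := T -> T -> C.

Definition expect (T : finType) (v : T -> C) (A : op T) : C :=
  \sum_(i : T) \sum_(j : T) conjc (v i) * A i j * v j.

Definition psd (T : finType) (A : op T) : Prop :=
  (forall i j, A j i = conjc (A i j)) /\ (forall v : T -> C, 0 <= expect v A).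

Definition povm (Z T : finType) (M : Z -> op T) : Prop :=
  (forall z, psd (M z)) /\
  (forall i j : T, \sum_(z : Z) M z i j = (i == j)%:R).

Definition proj (T : finType) (psi : T -> C) : op T := fun i j => psi i * conjc (psi j).
Definition trace_mul (T : finType) (A B : op T) : C :=
  \sum_(i : T) \sum_(j : T) A i j * B j i.

Definition anti_dist (X T : finType) (q : X -> R) (rho : X -> op T) : R :=
  1 - inf [set s : R | exists M : X -> op T, povm M /\
           s = \sum_(z : X) fmin (fun x => q x * complex.Re (trace_mul (rho x) (M z)))].

(* |psi_x> = cos(theta/2)|0> + (-1)^x sin(theta/2)|1>, basis |0>=false, |1>=true *)
Definition qubit_state (theta : R) (x : bool) : bool -> C :=
  fun b => if b then real_complex R ((-1) ^+ x * sin (theta / 2)) else real_complex R (cos (theta / 2)).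

(* N-bit strings: inputs x = (x_1..x_N), outcomes z, and computational basis
   of the N-qubit space (C^2)^{\otimes N} *)
Definition bits (N : nat) := {ffun 'I_N -> bool}.

Definition tensor_state (N : nat) (theta : R) (x : bits N) : bits N -> C :=
  fun b => \prod_(i < N) qubit_state theta (x i) (b i).

Definition successQ (N : nat) (theta : R) (M : bits N -> op (bits N)) : R :=
  1 - \sum_(x : bits N) (2^-1) ^+ N * complex.Re (expect (tensor_state theta x) (M x)).

Definition A_Q (theta : R) : R :=
  anti_dist (fun _ : bool => 2^-1) (fun x => proj (qubit_state theta x)).

(* A classical strategy: sender i has a finite message alphabet Msg i,
   an encoder pe i : x_i -> distribution on Msg i, and the receiver a decoder
   pd : (m_1..m_N) -> distribution on outcomes z. *)
Definition stochastic (X Y : finType) (p : X -> Y -> R) : Prop :=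
  (forall x y, 0 <= p x y) /\ (forall x, \sum_(y : Y) p x y = 1).

Definition classical_strategy (N : nat) (Msg : 'I_N -> finType)
  (pe : forall i : 'I_N, bool -> Msg i -> R)
  (pd : {dffun forall i : 'I_N, Msg i} -> bits N -> R) : Prop :=
  (forall i, stochastic (pe i)) /\ stochastic pd.

Definition probC (N : nat) (Msg : 'I_N -> finType)
  (pe : forall i : 'I_N, bool -> Msg i -> R)
  (pd : {dffun forall i : 'I_N, Msg i} -> bits N -> R) (z x : bits N) : R :=
  \sum_(m : {dffun forall i : 'I_N, Msg i}) (\prod_(i < N) pe i (x i) (m i)) * pd m z.

Definition successC (N : nat) (Msg : 'I_N -> finType)
  (pe : forall i : 'I_N, bool -> Msg i -> R)
  (pd : {dffun forall i : 'I_N, Msg i} -> bits N -> R) : R :=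
  1 - \sum_(x : bits N) (2^-1) ^+ N * probC pe pd x x.

Definition anti_distC (Msg : finType) (pe : bool -> Msg -> R) : R :=
  1 - \sum_(m : Msg) fmin (fun x : bool => 2^-1 * pe x m).

Definition A_C (N : nat) : R :=
  inf [set A : R | exists (Msg : 'I_N -> finType)
         (pe : forall i : 'I_N, bool -> Msg i -> R)
         (pd : {dffun forall i : 'I_N, Msg i} -> bits N -> R),
         classical_strategy pe pd /\ successC pe pd = 1 /\
         forall i : 'I_N, anti_distC (pe i) = A].

End Defs.

(* Main.v *)
Require Import Defs.
From HB Require Import structures.
From mathcomp Require Import all_boot all_order all_algebra.
From mathcomp Require Import all_classical all_reals.
From mathcomp Require Import exp trigo.
From mathcomp Require Import complex.
From mathcomp Require Import ring lra.
Import Order.TTheory GRing.Theory Num.Theory.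
Local Open Scope ring_scope.
Set Implicit Arguments. Unset Strict Implicit.

Section S2.
Local Open Scope classical_set_scope.

Lemma inf_min (R : realType) (S : set R) x :
  S x -> (forall y, S y -> x <= y) -> inf S = x.
Proof.
move=> Sx lb; apply/eqP; rewrite eq_le; apply/andP; split.
  by apply: ge_inf => //; exists x => y /lb.
by apply: lb_le_inf; [exists x | move=> y /lb].
Qed.

Lemma fmin_bool (R : realType) (f : bool -> R) : fmin f = Num.min (f false) (f true).
Proof.
apply: inf_min.
  by case: leP => _; [exists false|exists true].
move=> _ [[|] _ <-]; rewrite ge_min lexx ?orbT //.
Qed.

Lemma sum_pos_exists (R : realType) (T : finType) (f : T -> R) :
  (forall t, 0 <= f t) -> \sum_t f t != 0 -> exists t, 0 < f t.
Proof.
move=> f0 s0; apply/existsP; apply/negP => /existsP Hn.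
move/eqP: s0; apply; apply: big1 => t _.
apply/eqP; rewrite eq_le f0 andbT leNgt; apply/negP => ft.
by apply: Hn; exists t.
Qed.

Lemma class_A1 (R : realType) (N : nat) (Msg : 'I_N -> finType)
  (pe : forall i : 'I_N, bool -> Msg i -> R)
  (pd : {dffun forall i : 'I_N, Msg i} -> bits N -> R) (A : R) :
  classical_strategy pe pd -> successC pe pd = 1 ->
  (forall i, anti_distC (pe i) = A) -> A = 1.
Proof.
move=> [Hpe [pd0 pd1]] Hs HA; apply/eqP; apply/negPn/negP => HA1.
have H : forall i, exists m : Msg i, (0 < pe i false m) && (0 < pe i true m).
  move=> i; have [pe0 _] := Hpe i.
  have hs : \sum_(m : Msg i) fmin (fun x : bool => 2^-1 * pe i x m) != 0.
    apply/eqP => h; apply: (negP HA1); by rewrite -(HA i) /anti_distC h subr0.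
  have f0 : forall m, 0 <= fmin (fun x : bool => 2^-1 * pe i x m).
    by move=> m; rewrite fmin_bool le_min; apply/andP; split; apply: mulr_ge0; rewrite ?invr_ge0 ?pe0.
  have [m] := @sum_pos_exists R (Msg i) (fun m => fmin (fun x : bool => 2^-1 * pe i x m)) f0 hs.
  rewrite fmin_bool lt_min => /andP[a b]; exists m.
  have h2 : 0 < 2^-1 :> R by rewrite invr_gt0.
  by rewrite -(pmulr_rgt0 (pe i false m) h2) a -(pmulr_rgt0 (pe i true m) h2) b.
pose m0 : {dffun forall i : 'I_N, Msg i} := [ffun i => xchoose (H i)].
have [z zpos] : exists z, 0 < pd m0 z.
  apply: sum_pos_exists => //; by rewrite pd1 oner_neq0.
have pz : 0 < probC pe pd z z.
  rewrite /probC (bigD1 m0) //= ltr_pwDl //.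
    apply: mulr_gt0 => //; apply: prodr_gt0 => i _.
    rewrite ffunE; have /andP[a b] := xchooseP (H i); by case: (z i).
  apply: sumr_ge0 => m _; apply: mulr_ge0 => //; apply: prodr_ge0 => i _.
  by case: (Hpe i) => h _; apply: h.
move: Hs; rewrite /successC.
set S := \sum_(x : bits N) _ => Hs.
have S0 : S = 0 by lra.
have : 0 < S; last by rewrite S0 ltxx.
rewrite /S (bigD1 z) //= ltr_pwDl //.
  by rewrite mulr_gt0 // exprn_gt0 // invr_gt0.
apply: sumr_ge0 => x _; apply: mulr_ge0; first by rewrite exprn_ge0 // invr_ge0.
apply: sumr_ge0 => m _; apply: mulr_ge0 => //; apply: prodr_ge0 => i _.
by case: (Hpe i) => h _; apply: h.
Qed.

End S2.
Section S3.
Local Open Scope classical_set_scope.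

Lemma A_C1 (R : realType) (N : nat) : (1 <= N)%N -> A_C R N = 1.
Proof.
move=> N1; rewrite /A_C; apply: inf_min; last first.
  by move=> y [Msg [pe [pd [H1 [H2 H3]]]]]; rewrite (class_A1 H1 H2 H3).
pose Msg := fun _ : 'I_N => (bool : finType).
pose pe : forall i : 'I_N, bool -> Msg i -> R := fun i x m => if m == x then 1 else 0.
pose pd : {dffun forall i : 'I_N, Msg i} -> bits N -> R :=
  fun m z => \prod_i (if z i == ~~ m i then 1 else 0).
exists Msg, pe, pd; split; [split|split].
- move=> i; split; first by move=> x y; rewrite /pe; case: eqP.
  by move=> x; rewrite /pe -big_mkcond big_pred1_eq.
- split; first by move=> x y; apply: prodr_ge0 => i _; case: eqP.
  move=> m; rewrite /pd -(bigA_distr_bigA (fun i y => if y == ~~ m i then 1 else 0 : R)) /=.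
  by apply: big1 => i _; rewrite -big_mkcond big_pred1_eq.
- rewrite /successC big1 ?subr0 // => x _.
  rewrite /probC big1 ?mulr0 // => m _.
  rewrite /pd (bigD1 (Ordinal N1)) // [X in _ * X](bigD1 (Ordinal N1)) //= /pe.
  case: (m (Ordinal N1)); case: (x (Ordinal N1)); rewrite /= ?mul0r ?mulr0 //.
- move=> i; rewrite /anti_distC big1 ?subr0 // => m _.
  have h : 0 <= 2^-1 :> R by rewrite invr_ge0.
  rewrite fmin_bool /pe; case: m => /=; rewrite ?mulr0 ?mulr1.
    by rewrite minEle h.
  by rewrite minC minEle h.
Qed.

End S3.
Section S4.



Lemma trig_facts (R : realType) (N : nat) (theta : R) :
  (1 <= N)%N ->
  2 * atan (2 `^ (N%:R)^-1 - 1) <= theta ->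
  theta < pi / 2 ->
  let c := cos (theta / 2) in let s := sin (theta / 2) in
  [/\ 0 < c, 0 <= s, s <= c, c ^+ 2 + s ^+ 2 = 1 &
   [/\ sin theta = 2 * s * c, 2 * c ^+ N <= (c + s) ^+ N, 0 <= sin theta & sin theta < 1]].
Proof.
move=> N1 Hlo Hhi c s.
pose p : R := 2 `^ (N%:R)^-1.
have p0 : 0 <= p by apply: powR_ge0.
have pN : p ^+ N = 2.
  rewrite /p -powR_mulrn ?powR_ge0 // -powRrM mulVf ?powRr1 //.
  by rewrite pnatr_eq0 -lt0n.
have p1 : 1 <= p.
  rewrite leNgt; apply/negP => hp.
  have := exprn_ile1 N p0 (ltW hp); rewrite pN; lra.
have pi0 := pi_gt0 R.
have {}Hlo : 2 * atan (p - 1) <= theta := Hlo.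
have th0 : 0 <= theta.
  have : atan 0 <= atan (p - 1) by apply: (@le_atan R 0 (p - 1)); lra.
  rewrite atan0; lra.
have hc : 0 < c by apply: cos_gt0_pihalf; apply/andP; split; lra.
have hs : 0 <= s by apply: sin_ge0_pi; apply/andP; split; lra.
have hcs : c ^+ 2 + s ^+ 2 = 1 by rewrite /c /s cos2Dsin2.
have th2 : theta = (theta / 2) *+ 2 by rewrite -mulr_natr mulfVK // pnatr_eq0.
have hsin : sin theta = 2 * s * c by rewrite th2 sin_mulr2n /s /c; ring.
have hcos : cos theta = c ^+ 2 - s ^+ 2 by rewrite th2 cos_mulr2n /c /s; rewrite cos2sin2; ring.
have cth : 0 < cos theta by apply: cos_gt0_pihalf; apply/andP; split; lra.
have hsc : s <= c by nra.
have htan : p - 1 <= s / c.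
  rewrite leNgt; apply/negP => h.
  have : atan (p - 1) <= theta / 2 by lra.
  rewrite leNgt => /negP; apply.
  have I1 : theta / 2 \in `](- (pi / 2)), (pi / 2)[ by rewrite in_itv /=; apply/andP; split; lra.
  have I2 : atan (p - 1) \in `](- (pi / 2)), (pi / 2)[.
    by rewrite in_itv /= atan_gtNpi2 atan_ltpi2.
  by rewrite -(ltr_tan I1 I2) atanK.
have hcs2 : p * c <= c + s.
  have : (p - 1) * c <= s by rewrite ler_pdivlMr // in htan.
  lra.
have hN : 2 * c ^+ N <= (c + s) ^+ N.
  rewrite -pN -exprMn; apply: lerXn2r => //; rewrite nnegrE; [nra|lra].
split => //; split => //; nra.
Qed.

End S4.

Section Cx.
Local Open Scope complex_scope.
Variable R : realType.
Local Notation C := R[i].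

Lemma ReD (x y : C) : complex.Re (x + y) = complex.Re x + complex.Re y.
Proof. by case: x; case: y. Qed.

Lemma Re0 : complex.Re (0 : C) = 0. Proof. by []. Qed.

Lemma Re_sum (T : finType) (F : T -> C) :
  complex.Re (\sum_t F t) = \sum_t complex.Re (F t).
Proof. exact: (big_morph _ ReD Re0). Qed.

Lemma ReMr (k : R) (z : C) : complex.Re (k%:C * z) = k * complex.Re z.
Proof. by case: z => a b /=; rewrite mul0r subr0. Qed.

Lemma ReC (k : R) : complex.Re (k%:C : C) = k. Proof. by []. Qed.

Lemma expect_proj (T : finType) (v u : T -> C) :
  expect v (Defs.proj u) =
  conjc (\sum_j conjc (u j) * v j) * (\sum_j conjc (u j) * v j).
Proof.
rewrite /expect /Defs.proj rmorph_sum mulr_suml; apply: eq_bigr => i _.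
rewrite mulr_sumr; apply: eq_bigr => j _.
rewrite rmorphM /= conjcK; ring.
Qed.

Lemma psd_proj (T : finType) (u : T -> C) : psd (Defs.proj u).
Proof.
split.
  by move=> i j; rewrite /Defs.proj rmorphM /= conjcK mulrC.
by move=> v; rewrite expect_proj mulrC; apply: mulcJ_ge0.
Qed.

Lemma Re_trace_real (T : finType) (r : T -> R) (M : op R T) :
  complex.Re (trace_mul (Defs.proj (fun b => (r b)%:C)) M) =
  \sum_i \sum_j r i * r j * complex.Re (M j i).
Proof.
rewrite /trace_mul Re_sum; apply: eq_bigr => i _; rewrite Re_sum.
apply: eq_bigr => j _; rewrite /Defs.proj conjc_real -rmorphM ReMr //.
Qed.

Lemma Re_expect_real (T : finType) (r : T -> R) (M : op R T) :
  complex.Re (expect (fun b => (r b)%:C) M) =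
  \sum_i \sum_j r i * r j * complex.Re (M i j).
Proof.
rewrite /expect Re_sum; apply: eq_bigr => i _; rewrite Re_sum.
apply: eq_bigr => j _; rewrite conjc_real mulrC mulrA -rmorphM ReMr; congr (_ * _); ring.
Qed.

Lemma Re_ge0 (z : C) : 0 <= z -> 0 <= complex.Re z.
Proof. by rewrite lecE => /andP[]. Qed.

End Cx.
Section S6.
Local Open Scope complex_scope.

Lemma qubit_real (R : realType) (theta : R) (x : bool) :
  qubit_state theta x = fun b => (if b then (-1) ^+ x * sin (theta / 2) else cos (theta / 2))%:C.
Proof. by apply: funext => -[]. Qed.

Lemma AQ_val (R : realType) (theta : R) :
  let c := cos (theta / 2) in let s := sin (theta / 2) in
  0 <= c -> 0 <= s -> c ^+ 2 + s ^+ 2 = 1 -> sin theta = 2 * s * c ->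
  A_Q theta = (1 + sin theta) / 2.
Proof.
move=> c s c0 s0 cs sn.
rewrite /A_Q /anti_dist.
suff -> : inf [set s0 : R | exists M : bool -> op R bool, povm M /\
           s0 = \sum_(z : bool) fmin (fun x => 2^-1 * complex.Re (trace_mul (Defs.proj (qubit_state theta x)) (M z)))]
          = (1 - sin theta) / 2 by lra.
apply: inf_min.
  pose r : R := Num.sqrt 2^-1.
  have rr : r * r = 2^-1 by rewrite -expr2 sqr_sqrtr // invr_ge0.
  exists (fun z => Defs.proj (fun b => ((if z && b then -1 else 1) * r)%:C)); split.
    split; first by move=> z; apply: psd_proj.
    move=> i j; rewrite big_bool /Defs.proj !conjc_real.
    apply/eqP; rewrite eq_complex /=.
    by case: i; case: j => /=; apply/andP; split; apply/eqP; nra.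
  rewrite big_bool !fmin_bool !qubit_real !Re_trace_real !big_bool /Defs.proj /=.
  rewrite -/c -/s expr0 expr1 !mul1r !mulN1r ?mulrNN ?mulNr ?mulrN ?opprK ?oppr0 ?mulr0 ?subr0 ?rr ?addr0.
  have sc0 : 0 <= s * c by apply: mulr_ge0.
  have cs2 : c * c + s * s = 1 by rewrite -!expr2.
  rewrite sn !minEle; case: ifP => h1; case: ifP => h2; lra.
move=> y [M [[Mpsd Msum] ->]].
have hR : forall z i j, complex.Re (M z i j) = complex.Re (M z i j) by [].
have Rsum : forall i j, complex.Re (M true i j) + complex.Re (M false i j) = if i == j then 1 else 0.
  move=> i j; have := congr1 (@complex.Re R) (Msum i j).
  rewrite big_bool ReD => ->; by case: (i == j).
have Rpsd : forall z (r : bool -> R), 0 <= \sum_i \sum_j r i * r j * complex.Re (M z i j).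
  by move=> z r; rewrite -Re_expect_real; apply: Re_ge0; case: (Mpsd z) => _; apply.
have P1 := Rpsd true (fun _ => 1). have P2 := Rpsd true (fun b => if b then -1 else 1).
have P3 := Rpsd false (fun _ => 1). have P4 := Rpsd false (fun b => if b then -1 else 1).
have S1 := Rsum true true. have S2 := Rsum false false. have S3 := Rsum true false. have S4 := Rsum false true.
rewrite !big_bool /= in P1 P2 P3 P4 S1 S2 S3 S4.
rewrite big_bool !fmin_bool; rewrite !qubit_real !Re_trace_real !big_bool /=.
rewrite -/c -/s expr0 expr1 !mul1r ?mulN1r ?mulrN ?opprK.
move: P1 P2 P3 P4 S1 S2 S3 S4.
set vat := complex.Re (M true false false); set vaf := complex.Re (M false false false).
set vdt := complex.Re (M true true true); set vdf := complex.Re (M false true true).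
set vxt := complex.Re (M true true false); set vxf := complex.Re (M false true false).
set vyt := complex.Re (M true false true); set vyf := complex.Re (M false false true).
move=> P1 P2 P3 P4 S1 S2 S3 S4.
have -> : vaf = 1 - vat by lra. have -> : vdf = 1 - vdt by lra.
have -> : vxf = - vxt by lra. have -> : vyf = - vyt by lra.
have E1 : vxt + vyt <= 1 by lra. have E2 : -1 <= vxt + vyt by lra.
have sc0 : 0 <= s * c by apply: mulr_ge0.
have h1 : 0 <= s * c * (1 - (vxt + vyt)) by apply: mulr_ge0 => //; lra.
have h2 : 0 <= s * c * (1 + (vxt + vyt)) by apply: mulr_ge0 => //; lra.
rewrite sn !minEle; case: ifP => _; case: ifP => _; nra.
Qed.

End S6.
Section S7.
Local Open Scope complex_scope.

Lemma unit_phase (R : realType) (a b A : R) : a ^+ 2 + b ^+ 2 = A ^+ 2 ->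
  exists al : R[i], al * conjc al = 1 /\ al * A%:C = a +i* b.
Proof.
move=> h; have [A0|A0] := eqVneq A 0.
  rewrite A0 !expr2 mul0r in h; rewrite A0.
  have a0 : a * a = 0 by nra. have b0 : b * b = 0 by nra.
  move/eqP: a0; rewrite mulf_eq0 orbb => /eqP a0.
  move/eqP: b0; rewrite mulf_eq0 orbb => /eqP b0.
  exists 1; split; first by rewrite conjc1 mulr1.
  by rewrite a0 b0 mulr0.
exists ((a / A) +i* (b / A)); split; apply/eqP; rewrite eq_complex /=; apply/andP; split; apply/eqP.
- idtac.
  have : (a / A) ^+ 2 + (b / A) ^+ 2 = 1.
    by rewrite !expr_div_n -mulrDl h divff // expf_neq0.
  rewrite !expr2; lra.
- ring.
- rewrite mulr0 subr0 mulfVK //.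
- by rewrite mulr0 add0r mulfVK.
Qed.

Lemma triangle (R : realType) (w0 A B : R) : 0 < w0 -> 0 <= A -> 0 <= B ->
  B <= A + w0 -> w0 <= A + B -> A <= B + w0 ->
  exists al be : R[i], [/\ al * conjc al = 1, be * conjc be = 1 &
     w0%:C + al * A%:C + be * B%:C = 0].
Proof.
move=> w00 A0 B0 h1 h2 h3.
pose p := (B ^+ 2 - A ^+ 2 - w0 ^+ 2) / (2 * w0).
have key : (2 * w0) ^+ 2 * (A ^+ 2 - p ^+ 2) =
   ((A + w0 - B) * (A + w0 + B)) * ((B - A + w0) * (B + A - w0)).
  rewrite /p; field; lra.
have hq : 0 <= A ^+ 2 - p ^+ 2.
  have : 0 <= (2 * w0) ^+ 2 * (A ^+ 2 - p ^+ 2).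
    rewrite key; apply: mulr_ge0; apply: mulr_ge0; lra.
  rewrite pmulr_rge0 //; apply: exprn_gt0; lra.
pose q := Num.sqrt (A ^+ 2 - p ^+ 2).
have q2 : q ^+ 2 = A ^+ 2 - p ^+ 2 by rewrite sqr_sqrtr.
have [al [al1 alA]] := @unit_phase R p q A ltac:(lra).
have hb : (- (w0 + p)) ^+ 2 + (- q) ^+ 2 = B ^+ 2.
  have : 2 * w0 * p = B ^+ 2 - A ^+ 2 - w0 ^+ 2.
    rewrite /p mulrC divfK //; lra.
  rewrite !sqrrN q2; nra.
have [be [be1 beB]] := @unit_phase R (- (w0 + p)) (- q) B hb.
exists al, be; split => //.
rewrite alA beB; apply/eqP; rewrite eq_complex /=; apply/andP; split; apply/eqP; ring.
Qed.

End S7.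

Section NQ.
Local Open Scope complex_scope.
Variable R : realType.
Variable N : nat.
Local Notation C := R[i].

Definition z0 : bits N := [ffun _ => false].
Definition epsb (j : bits N) : R := \prod_k (if j k then -1 else 1).
Definition sgb (x j : bits N) : R := \prod_k (if x k && j k then -1 else 1).
Definition wb (c s : R) (j : bits N) : R := \prod_k (if j k then s else c).

Lemma tensor_real (theta : R) x j :
  tensor_state theta x j = (sgb x j * wb (cos (theta / 2)) (sin (theta / 2)) j)%:C.
Proof.
rewrite /tensor_state (eq_bigr (fun k => ((if x k && j k then -1 else 1) *
   (if j k then sin (theta / 2) else cos (theta / 2)))%:C)); last first.
  by move=> k _; rewrite qubit_real; case: (x k); case: (j k); rewrite /= ?expr0 ?expr1 ?mul1r ?mulN1r.
by rewrite -rmorph_prod big_split.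
Qed.

Lemma sgb_sq x j : sgb x j * sgb x j = 1.
Proof.
rewrite /sgb -big_split /=; apply: big1 => k _.
by case: (x k && j k); rewrite ?mulrNN mulr1.
Qed.

Lemma sgb_sum i j : \sum_x sgb x i * sgb x j = if i == j then 2 ^+ N else 0.
Proof.
rewrite (eq_bigr (fun x : bits N => \prod_k ((if x k && i k then -1 else 1) *
   (if x k && j k then -1 else 1)))); last by move=> x _; rewrite /sgb -big_split.
rewrite -(bigA_distr_bigA (fun k y => (if y && i k then -1 else 1) *
   (if y && j k then -1 else 1) : R)) /=.
case: eqP => [<-|nij].
  rewrite (eq_bigr (fun _ => 2)) ?prodr_const ?card_ord //.
  by move=> k _; rewrite big_bool /=; case: (i k); rewrite ?mulrNN mulr1.
have [k hk] : exists k, i k != j k.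
  case: (boolP [exists k, i k != j k]) => [/existsP //|/existsPn hn].
  by case: nij; apply/ffunP => k; apply/eqP; move: (hn k); rewrite negbK.
rewrite (bigD1 k) // big_bool /=.
by move: hk; case: (i k); case: (j k); rewrite //= ?mulrN ?mulr1 ?mulN1r ?subrr ?mul0r ?addNr ?mul0r.
Qed.

Lemma eps_pm j : epsb j = 1 \/ epsb j = -1.
Proof.
rewrite /epsb; apply: (big_ind (fun r : R => r = 1 \/ r = -1)); first by left.
  by move=> a b [] -> [] ->; rewrite ?mulr1 ?mul1r ?mulrNN ?mulr1; [left|right|right|left].
by move=> k _; case: (j k); [right|left].
Qed.

Lemma eps_z0 : epsb z0 = 1.
Proof. by rewrite /epsb; apply: big1 => k _; rewrite ffunE. Qed.

Lemma wb_z0 c s : wb c s z0 = c ^+ N.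
Proof. by rewrite /wb (eq_bigr (fun _ => c)) ?prodr_const ?card_ord // => k _; rewrite ffunE. Qed.

Lemma wb_sum c s : \sum_j wb c s j = (c + s) ^+ N.
Proof.
rewrite /wb -(bigA_distr_bigA (fun k y => if y then s else c)) /=.
by rewrite (eq_bigr (fun _ => c + s)) ?prodr_const ?card_ord // => k _; rewrite big_bool addrC.
Qed.

Lemma wb_eps_sum c s : \sum_j epsb j * wb c s j = (c - s) ^+ N.
Proof.
rewrite (eq_bigr (fun j : bits N => \prod_k ((if j k then -1 else 1) * (if j k then s else c))));
  last by move=> j _; rewrite /epsb /wb -big_split.
rewrite -(bigA_distr_bigA (fun k y => (if y then -1 else 1) * (if y then s else c) : R)) /=.
rewrite (eq_bigr (fun _ => c - s)) ?prodr_const ?card_ord // => k _.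
by rewrite big_bool /= mulN1r mul1r addrC.
Qed.

Lemma split3 (V : nmodType) (F : bits N -> V) :
  \sum_j F j = F z0 + \sum_(j | (j != z0) && (epsb j == 1)) F j
                    + \sum_(j | (j != z0) && (epsb j != 1)) F j.
Proof. by rewrite (bigD1 z0) //= (bigID (fun j => epsb j == 1)) /= addrA. Qed.

End NQ.
Section S9.
Local Open Scope complex_scope.

Lemma quantum_part (R : realType) (N : nat) (theta : R) :
  let c := cos (theta / 2) in let s := sin (theta / 2) in
  0 < c -> 0 <= s -> s <= c -> 2 * c ^+ N <= (c + s) ^+ N ->
  exists M : bits N -> op R (bits N),
      povm M /\
      (forall x : bits N, expect (tensor_state theta x) (M x) = 0) /\
      successQ theta M = 1.
Proof.
move=> c s c0 s0 sc hN.
pose w0 := c ^+ N.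
have {}hN : 2 * w0 <= (c + s) ^+ N := hN.
pose A := \sum_(j | (j != z0 N) && (epsb R j == 1)) wb c s j.
pose B := \sum_(j | (j != z0 N) && (epsb R j != 1)) wb c s j.
have e1 : w0 + A + B = (c + s) ^+ N by rewrite -(wb_sum N c s) (split3 R (wb c s)) wb_z0.
have e2 : w0 + A - B = (c - s) ^+ N.
  rewrite -(wb_eps_sum N c s) (split3 R (fun j => epsb R j * wb c s j)) (eps_z0 R N) mul1r wb_z0.
  rewrite -/w0 /A /B -sumrN; congr (_ + _ + _).
    by apply: eq_bigr => j /andP[_ /eqP ->]; rewrite mul1r.
  apply: eq_bigr => j /andP[_ h]; case: (eps_pm R j) => e; first by rewrite e eqxx in h.
  by rewrite e mulN1r.
have wge0 : forall j : bits N, 0 <= wb c s j.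
  by move=> j; rewrite /wb; apply: prodr_ge0 => k _; case: (j k); lra.
have A0 : 0 <= A by apply: sumr_ge0.
have B0 : 0 <= B by apply: sumr_ge0.
have w00 : 0 < w0 by apply: exprn_gt0.
have cs1 : 0 <= (c - s) ^+ N by apply: exprn_ge0; lra.
have cs2 : (c - s) ^+ N <= w0.
  by apply: lerXn2r; rewrite ?nnegrE; lra.
have [al [be [al1 be1 tri]]] := @triangle R w0 A B w00 A0 B0 ltac:(lra) ltac:(lra) ltac:(lra).
pose zeta (j : bits N) : R[i] := if j == z0 N then 1 else if epsb R j == 1 then al else be.
have zeta1 : forall j, zeta j * conjc (zeta j) = 1.
  by move=> j; rewrite /zeta; case: ifP => _; [rewrite conjc1 mulr1|case: ifP].
have zsum : \sum_j (wb c s j)%:C * zeta j = 0.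
  apply: (etrans _ tri).
  rewrite (split3 R (fun j => (wb c s j)%:C * zeta j)) {1}/zeta eqxx mulr1 wb_z0.
  rewrite -/w0; congr (_ + _ + _).
    rewrite /A rmorph_sum mulr_sumr; apply: eq_bigr => j /andP[h1 h2].
    by rewrite /zeta (negbTE h1) h2 mulrC.
  rewrite /B rmorph_sum mulr_sumr; apply: eq_bigr => j /andP[h1 h2].
  by rewrite /zeta (negbTE h1) (negbTE h2) mulrC.
pose r : R := Num.sqrt 2^-1 ^+ N.
have rr : r * r = 2^-1 ^+ N by rewrite -exprMn -expr2 sqr_sqrtr // invr_ge0.
pose u (x j : bits N) : R[i] := (sgb R x j)%:C * (r%:C * conjc (zeta j)).
have hexp : forall x, expect (tensor_state theta x) (Defs.proj (u x)) = 0.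
  move=> x; rewrite expect_proj.
  suff -> : \sum_j conjc (u x j) * tensor_state theta x j = 0 by rewrite mulr0.
  rewrite (eq_bigr (fun j => r%:C * ((wb c s j)%:C * zeta j))); last first.
    move=> j _; rewrite tensor_real /u !rmorphM /= conjcK !oppr0 !complexr0 -/c -/s.
    have := sgb_sq R x j => h.
    transitivity ((sgb R x j * sgb R x j)%:C * (r%:C * ((wb c s j)%:C * zeta j))); last by rewrite h mul1r.
    rewrite !rmorphM; ring.
  by rewrite -mulr_sumr zsum mulr0.
exists (fun x => Defs.proj (u x)); split; [split|split].
- by move=> x; apply: psd_proj.
- move=> i j; rewrite /Defs.proj /u.
  rewrite (eq_bigr (fun x => (sgb R x i * sgb R x j)%:C * ((r * r)%:C * (conjc (zeta i) * zeta j)))); last first.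
    move=> x _; rewrite !rmorphM /= conjcK !oppr0 !complexr0; ring.
  rewrite -mulr_suml -rmorph_sum (sgb_sum R).
  case: eqP => [<-|_]; last by rewrite mul0r.
  by rewrite rr mulrA -rmorphM -exprMn divff ?pnatr_eq0 // expr1n rmorph1 mul1r mulrC zeta1.
- exact: hexp.
- by rewrite /successQ big1 ?subr0 // => x _; rewrite hexp mulr0.
Qed.

End S9.

Unset Implicit Arguments.

Theorem theorem2 (R : realType) (N : nat) (theta : R) :
  (1 <= N)%N ->
  2 * atan (2 `^ (N%:R)^-1 - 1) <= theta ->
  theta < pi / 2 ->
  (exists M : bits N -> op R (bits N),
      povm M /\
      (forall x : bits N, expect (tensor_state theta x) (M x) = 0) /\
      successQ theta M = 1) /\
  A_Q theta = (1 + sin theta) / 2 /\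
  A_C R N = 1 /\
  (A_C R N / A_Q theta) ^+ N = (2 / (1 + sin theta)) ^+ N /\
  1 < (2 / (1 + sin theta)) ^+ N.
Proof.
move=> N1 Hlo Hhi.
have [c0 s0 sc cs [sn hN sin0 sin1]] := @trig_facts R N theta N1 Hlo Hhi.
have AQ := @AQ_val R theta (ltW c0) s0 cs sn.
have AC := @A_C1 R N N1.
split; first exact: (@quantum_part R N theta c0 s0 sc hN).
split => //; split => //; split.
  by rewrite AC AQ div1r invf_div.
rewrite expr_gt1 //; last by apply: divr_ge0 => //; lra.
by rewrite ltr_pdivlMr ?mul1r; lra.
Qed.
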